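(* Let $A$ be a strongly AUF algebra and let $e\in A$ be a generating idempotent. Then the map $$\mathrm{SLF}(A)\to\mathrm{SLF}(eAe),\qquad \psi\mapsto\psi|_{eAe}$$ is a linear isomorphism, whose inverse is $\mathrm{SLF}(eAe)\to\mathrm{SLF}(A)$, $\phi\mapsto\mathrm{Tr}^\phi$, where $\mathrm{Tr}^\phi$ is the left pseudotrace on $A$ associated to $\phi$ and the $A$-$(eAe)$ bimodule $Ae$.
   Context: All algebras are associative $\mathbb C$-algebras, not necessarily unital. An idempotent is an element $e$ with $e^2=e$. An algebra $A$ is AUF if there is a family $(e_i)_{i\in\mathfrak I}$ of mutually orthogonal idempotents with $\dim e_iAe_j<\infty$ and $A=\sum_{i,j}e_iAe_j$. A left $A$-module $M$ is quasicoherent if $\xi\in A\xi$ for all $\xi\in M$. Irreducible means nonzero with no nonzero proper submodules. An idempotent $e\in A$ is generating if every irreducible quasicoherent left $A$-module is a quotient of $Ae$; $A$ is strongly AUF if it is AUF and has a generating idempotent. $\mathrm{SLF}(C)$ is the space of linear $\phi:C\to\mathbb C$ with $\phi(xy)=\phi(yx)$. Note $eAe$ is unital with unit $e$, and $Ae$ is an $A$-$(eAe)$ bimodule by multiplication. Left coordinate system (for algebras $A,B$, $B$ unital, $M$ an $A$-$B$ bimodule): right $B$-module maps $\alpha_i:B\to M$, $\check\alpha^i:M\to B$, $i\in I$, such that (a) for each $\xi\in M$, $\check\alpha^i(\xi)=0$ for all but finitely many $i$ and $\sum_i\alpha_i\check\alpha^i(\xi)=\xi$; (b) for each $x\in A$,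 $x\circ\alpha_i=0$ and $\check\alpha^i\circ x=0$ for all but finitely many $i$. Given one, the left pseudotrace of $\phi\in\mathrm{SLF}(B)$ is $\mathrm{Tr}^\phi(x)=\sum_i\phi(\check\alpha^i(x\,\alpha_i(1_B)))$, $x\in A$; it is independent of the left coordinate system and lies in $\mathrm{SLF}(A)$. Under the hypotheses of the claim, the $A$-$(eAe)$ bimodule $Ae$ admits a left coordinate system, so $\mathrm{Tr}^\phi$ is defined. *)

(* Defs.v *)
(* Non-unital associative algebras over a field K are
   encoded as a K-vector space [A : lmodType K] together with an explicit
   bilinear associative multiplication [mul : A -> A -> A]. *)
From mathcomp Require Import all_boot all_algebra.
From mathcomp Require Import reals complex.
From Stdlib Require List.
Set Implicit Arguments.
Unset Strict Implicit.
Unset Printing Implicit Defensive.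
Import GRing.Theory.
Local Open Scope ring_scope.

Section AUF.
Variables (K : fieldType) (A : lmodType K) (mul : A -> A -> A).

Definition is_algebra : Prop :=
  (forall x y z, mul x (mul y z) = mul (mul x y) z) /\
  (forall a x y, mul a (x + y) = mul a x + mul a y) /\
  (forall a x y, mul (x + y) a = mul x a + mul y a) /\
  (forall (c : K) a x, mul a (c *: x) = c *: mul a x) /\
  (forall (c : K) a x, mul (c *: x) a = c *: mul x a).

Definition idempotent (e : A) : Prop := mul e e = e.

Definition findim (P : A -> Prop) : Prop :=
  exists s : seq A, forall x, P x ->
    exists c : nat -> K, x = \sum_(i < size s) c i *: s`_i.

Definition AUF : Prop :=
  exists (I : Type) (f : I -> A),
    (forall i, idempotent (f i)) /\
    (forall i j, i <> j -> mul (f i) (f j) = 0) /\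
    (forall i j, findim (fun x => exists a, x = mul (f i) (mul a (f j)))) /\
    (forall x, exists (s : seq (I * I)) (a : I * I -> A),
        x = \sum_(p <- s) mul (f p.1) (mul (a p) (f p.2))).

Definition is_module (M : lmodType K) (act : A -> M -> M) : Prop :=
  (forall a b m, act (mul a b) m = act a (act b m)) /\
  (forall a m n, act a (m + n) = act a m + act a n) /\
  (forall a b m, act (a + b) m = act a m + act b m) /\
  (forall (c : K) a m, act a (c *: m) = c *: act a m) /\
  (forall (c : K) a m, act (c *: a) m = c *: act a m).

Definition quasicoherent (M : lmodType K) (act : A -> M -> M) : Prop :=
  forall m, exists a, act a m = m.

Definition submodule (M : lmodType K) (act : A -> M -> M) (S : M -> Prop) : Prop :=
  S 0 /\ (forall m n, S m -> S n -> S (m + n)) /\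
  (forall (c : K) m, S m -> S (c *: m)) /\ (forall a m, S m -> S (act a m)).

Definition irreducible (M : lmodType K) (act : A -> M -> M) : Prop :=
  (exists m : M, m <> 0) /\
  forall S, submodule act S -> (forall m, S m -> m = 0) \/ (forall m, S m).

Definition in_Ae (e x : A) : Prop := exists a, x = mul a e.
Definition in_eAe (e x : A) : Prop := exists a, x = mul e (mul a e).

Definition quotient_of_Ae (e : A) (M : lmodType K) (act : A -> M -> M) : Prop :=
  exists f : A -> M,
    (forall x y, in_Ae e x -> in_Ae e y -> f (x + y) = f x + f y) /\
    (forall (c : K) x, in_Ae e x -> f (c *: x) = c *: f x) /\
    (forall a x, in_Ae e x -> f (mul a x) = act a (f x)) /\
    (forall m, exists x, in_Ae e x /\ f x = m).

Definition generating (e : A) : Prop :=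
  idempotent e /\
  forall (M : lmodType K) (act : A -> M -> M),
    is_module act -> quasicoherent act -> irreducible act -> quotient_of_Ae e act.

Definition strongly_AUF : Prop := AUF /\ exists e, generating e.

Definition SLF (psi : A -> K) : Prop :=
  (forall x y, psi (x + y) = psi x + psi y) /\
  (forall (c : K) x, psi (c *: x) = c * psi x) /\
  (forall x y, psi (mul x y) = psi (mul y x)).

(* SLF(eAe), functionals represented by functions A -> K, only their values
   on eAe matter *)
Definition SLF_eAe (e : A) (phi : A -> K) : Prop :=
  (forall x y, in_eAe e x -> in_eAe e y -> phi (x + y) = phi x + phi y) /\
  (forall (c : K) x, in_eAe e x -> phi (c *: x) = c * phi x) /\
  (forall x y, in_eAe e x -> in_eAe e y -> phi (mul x y) = phi (mul y x)).

(* Left coordinate system for the A-(eAe) bimodule Ae: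
   al i : eAe -> Ae,  ch i : Ae -> eAe, right eAe-module maps. *)
Definition left_coord_sys (e : A) (I : Type) (al ch : I -> A -> A) : Prop :=
  (forall i b, in_eAe e b -> in_Ae e (al i b)) /\
  (forall i b b', in_eAe e b -> in_eAe e b' -> al i (b + b') = al i b + al i b') /\
  (forall i (c : K) b, in_eAe e b -> al i (c *: b) = c *: al i b) /\
  (forall i b b', in_eAe e b -> in_eAe e b' -> al i (mul b b') = mul (al i b) b') /\
  (forall i x, in_Ae e x -> in_eAe e (ch i x)) /\
  (forall i x y, in_Ae e x -> in_Ae e y -> ch i (x + y) = ch i x + ch i y) /\
  (forall i (c : K) x, in_Ae e x -> ch i (c *: x) = c *: ch i x) /\
  (forall i x b, in_Ae e x -> in_eAe e b -> ch i (mul x b) = mul (ch i x) b) /\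
  (forall xi, in_Ae e xi -> exists s : seq I, List.NoDup s /\
      (forall i, ~ List.In i s -> ch i xi = 0) /\
      xi = \sum_(i <- s) al i (ch i xi)) /\
  (forall x, exists s : seq I, forall i, ~ List.In i s ->
      (forall b, in_eAe e b -> mul x (al i b) = 0) /\
      (forall xi, in_Ae e xi -> ch i (mul x xi) = 0)).

(* t is the left pseudotrace Tr^phi computed from (al, ch):
   t x = sum_i phi (ch i (x * al i e))   (al i e = al_i(1_B), a finite sum) *)
Definition is_left_pseudotrace (e : A) (I : Type) (al ch : I -> A -> A)
    (phi t : A -> K) : Prop :=
  forall x, exists s : seq I, List.NoDup s /\
    (forall i, ~ List.In i s -> phi (ch i (mul x (al i e))) = 0) /\
    t x = \sum_(i <- s) phi (ch i (mul x (al i e))).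

End AUF.

(* Main.v *)
From HB Require Import structures.
From mathcomp Require Import all_boot all_algebra.
From mathcomp Require Import reals complex.
From mathcomp Require Import boolp classical_sets.
From Stdlib Require List.
Require Import Defs.
Set Implicit Arguments.
Unset Strict Implicit.
Unset Printing Implicit Defensive.
Import GRing.Theory.
Local Open Scope ring_scope.

Section Quot.
Local Open Scope quotient_scope.
Variables (K : fieldType) (A : lmodType K) (P : A -> Prop).
Hypotheses (P0 : P 0) (PD : forall x y, P x -> P y -> P (x + y))
  (PZ : forall (c : K) x, P x -> P (c *: x)).

Lemma PN x : P x -> P (- x).
Proof. by move=> /(PZ (-1)); rewrite scaleN1r. Qed.

Definition qrel (x y : A) : bool := `[< P (x - y) >].

Lemma qrel_refl : reflexive qrel.
Proof. by move=> x; apply/asboolP; rewrite subrr. Qed.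
Lemma qrel_sym : symmetric qrel.
Proof.
move=> x y; apply/asboolP/asboolP => /PN; by rewrite opprB.
Qed.
Lemma qrel_trans : transitive qrel.
Proof.
move=> y x z /asboolP h1 /asboolP h2; apply/asboolP.
by have := PD h1 h2; rewrite addrA subrK.
Qed.

Canonical qe := EquivRel qrel qrel_refl qrel_sym qrel_trans.
Definition Q := {eq_quot qe}.
HB.instance Definition _ := Choice.on Q.
HB.instance Definition _ := EqQuotient.on Q.

Definition qpi (x : A) : Q := \pi_Q x.

Lemma qpiP x y : qpi x = qpi y <-> P (x - y).
Proof.
split; first by move/eqmodP/asboolP.
by move=> h; apply/eqmodP/asboolP.
Qed.

Lemma qrepr (q : Q) : qpi (repr q) = q.
Proof. exact: reprK. Qed.

Lemma qind (Pr : Q -> Prop) : (forall x, Pr (qpi x)) -> forall q, Pr q.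
Proof. by move=> h q; rewrite -(qrepr q). Qed.

Definition qadd (a b : Q) : Q := qpi (repr a + repr b).
Definition qopp (a : Q) : Q := qpi (- repr a).
Definition qzero : Q := qpi 0.
Definition qscale (c : K) (a : Q) : Q := qpi (c *: repr a).

Lemma repr_qpi x : P (repr (qpi x) - x).
Proof. by apply/qpiP; rewrite qrepr. Qed.

Lemma qaddE x y : qadd (qpi x) (qpi y) = qpi (x + y).
Proof.
apply/qpiP; have := PD (repr_qpi x) (repr_qpi y).
by congr P; rewrite opprD addrACA.
Qed.
Lemma qoppE x : qopp (qpi x) = qpi (- x).
Proof. by apply/qpiP; have := PN (repr_qpi x); congr P; rewrite opprB opprK addrC. Qed.
Lemma qscaleE c x : qscale c (qpi x) = qpi (c *: x).
Proof. by apply/qpiP; have := PZ c (repr_qpi x); rewrite scalerBr. Qed.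

Lemma qaddA : associative qadd.
Proof. by elim/qind=> x; elim/qind=> y; elim/qind=> z; rewrite !qaddE addrA. Qed.
Lemma qaddC : commutative qadd.
Proof. by elim/qind=> x; elim/qind=> y; rewrite !qaddE addrC. Qed.
Lemma qadd0 : left_id qzero qadd.
Proof. by elim/qind=> x; rewrite /qzero qaddE add0r. Qed.
Lemma qaddN : left_inverse qzero qopp qadd.
Proof. by elim/qind=> x; rewrite qoppE qaddE addNr. Qed.

HB.instance Definition _ := GRing.isZmodule.Build Q qaddA qaddC qadd0 qaddN.

Lemma qscaleA a b v : qscale a (qscale b v) = qscale (a * b) v.
Proof. by elim/qind: v => x; rewrite !qscaleE scalerA. Qed.
Lemma qscale1 : left_id 1 qscale.
Proof. by elim/qind=> x; rewrite qscaleE scale1r. Qed.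
Lemma qaddr (u v : Q) : u + v = qadd u v. Proof. by []. Qed.
Lemma qscaleDr : right_distributive qscale +%R.
Proof. move=> a; elim/qind=> x; elim/qind=> y; by rewrite !qaddr (qaddE x y) !qscaleE qaddE scalerDr. Qed.
Lemma qscaleDl v : {morph qscale^~ v: a b / a + b}.
Proof. by elim/qind: v => x a b; rewrite !qaddr !qscaleE qaddE scalerDl. Qed.

HB.instance Definition _ := GRing.Zmodule_isLmodule.Build K Q qscaleA qscale1 qscaleDr qscaleDl.

Lemma qpiD x y : qpi (x + y) = qpi x + qpi y.
Proof. by rewrite qaddr qaddE. Qed.
Lemma qpiZ c x : qpi (c *: x) = c *: qpi x.
Proof. by rewrite -qscaleE. Qed.
Lemma qpi0 : qpi 0 = 0.
Proof. by []. Qed.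
Lemma qpi_eq0 x : qpi x = 0 <-> P x.
Proof. by rewrite -qpi0 qpiP subr0. Qed.
End Quot.
Section Alg.
Variables (K : fieldType) (A : lmodType K) (mul : A -> A -> A).
Hypothesis H : is_algebra mul.

Lemma mulA x y z : mul x (mul y z) = mul (mul x y) z.
Proof. by case: H. Qed.
Lemma mulDr a x y : mul a (x + y) = mul a x + mul a y.
Proof. by case: H => _ []. Qed.
Lemma mulDl a x y : mul (x + y) a = mul x a + mul y a.
Proof. by case: H => _ [] _ []. Qed.
Lemma mulZr (c : K) a x : mul a (c *: x) = c *: mul a x.
Proof. by case: H => _ [] _ [] _ []. Qed.
Lemma mulZl (c : K) a x : mul (c *: x) a = c *: mul x a.
Proof. by case: H => _ [] _ [] _ []. Qed.
Lemma amul0r x : mul 0 x = 0.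
Proof. by rewrite -[X in mul X _](@scale0r K A 0) mulZl scale0r. Qed.
Lemma amulr0 x : mul x 0 = 0.
Proof. by rewrite -[X in mul _ X](@scale0r K A 0) mulZr scale0r. Qed.
Lemma amulNr x y : mul (- x) y = - mul x y.
Proof. by rewrite -scaleN1r mulZl scaleN1r. Qed.
Lemma amulrN x y : mul x (- y) = - mul x y.
Proof. by rewrite -scaleN1r mulZr scaleN1r. Qed.
Lemma mulBr a x y : mul a (x - y) = mul a x - mul a y.
Proof. by rewrite mulDr amulrN. Qed.
Lemma mulBl a x y : mul (x - y) a = mul x a - mul y a.
Proof. by rewrite mulDl amulNr. Qed.
Lemma mul_sumr (I : Type) (s : seq I) (F : I -> A) a :
  mul a (\sum_(i <- s) F i) = \sum_(i <- s) mul a (F i).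
Proof.
elim: s => [|i s IH]; first by rewrite !big_nil amulr0.
by rewrite !big_cons mulDr IH.
Qed.
Lemma mul_suml (I : Type) (s : seq I) (F : I -> A) a :
  mul (\sum_(i <- s) F i) a = \sum_(i <- s) mul (F i) a.
Proof.
elim: s => [|i s IH]; first by rewrite !big_nil amul0r.
by rewrite !big_cons mulDl IH.
Qed.

Definition lideal (S : A -> Prop) : Prop :=
  S 0 /\ (forall x y, S x -> S y -> S (x + y)) /\
  (forall (c : K) x, S x -> S (c *: x)) /\ (forall a x, S x -> S (mul a x)).

Definition inN (e z : A) : Prop :=
  exists s : seq (A * A), z = \sum_(p <- s) mul p.1 (mul e p.2).

Lemma inN0 e : inN e 0.
Proof. by exists [::]; rewrite big_nil. Qed.
Lemma inND e x y : inN e x -> inN e y -> inN e (x + y).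
Proof. by move=> [s ->] [t ->]; exists (s ++ t); rewrite big_cat. Qed.
Lemma inNZ e (c : K) x : inN e x -> inN e (c *: x).
Proof.
move=> [s ->]; exists [seq (c *: p.1, p.2) | p <- s].
rewrite big_map scaler_sumr; apply: eq_bigr => p _ /=.
by rewrite mulZl.
Qed.
Lemma inNl e a x : inN e x -> inN e (mul a x).
Proof.
move=> [s ->]; exists [seq (mul a p.1, p.2) | p <- s].
by rewrite big_map mul_sumr; apply: eq_bigr => p _ /=; rewrite mulA.
Qed.
Lemma inNr e a x : inN e x -> inN e (mul x a).
Proof.
move=> [s ->]; exists [seq (p.1, mul p.2 a) | p <- s].
by rewrite big_map mul_suml; apply: eq_bigr => p _ /=; rewrite -!mulA.
Qed.
Lemma inN_e e x : idempotent mul e -> inN e (mul e x).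
Proof.
move=> he; exists [:: (e, x)]; rewrite big_cons big_nil addr0 /=.
by rewrite mulA he.
Qed.


Lemma lideal_ext (S S' : A -> Prop) :
  (forall z, S z <-> S' z) -> lideal S -> lideal S'.
Proof.
move=> E [h0 [hD [hZ hM]]]; split; first exact/E.
split; first by move=> x y /E hx /E hy; apply/E; apply: hD.
split; first by move=> c x /E hx; apply/E; apply: hZ.
by move=> a x /E hx; apply/E; apply: hM.
Qed.

Lemma idem_inN (e u : A) : generating mul e -> idempotent mul u -> inN e u.
Proof.
move=> [he gen] hu; apply: contrapT => nNu.
pose P0 z := exists n x, inN e n /\ z = n + (x - mul x u).
have P0l : lideal P0.
  split; first by exists 0, 0; rewrite amul0r !subrr addr0; split=> //; exact: inN0.
  split.
    move=> _ _ [n1 [x1 [h1 ->]]] [n2 [x2 [h2 ->]]]; exists (n1 + n2), (x1 + x2).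
    split; first exact: inND.
    by rewrite mulDl opprD addrACA; congr (_ + _); rewrite addrACA.
  split.
    move=> c _ [n [x [h ->]]]; exists (c *: n), (c *: x); split; first exact: inNZ.
    by rewrite mulZl -scalerBr -scalerDr.
  move=> a _ [n [x [h ->]]]; exists (mul a n), (mul a x); split; first exact: inNl.
  by rewrite mulDr mulBr mulA.
have nP0u : ~ P0 u.
  move=> [n [x [hn hx]]]; apply: nNu.
  have : u = mul n u by rewrite -{1}hu {1}hx mulDl mulBl -mulA hu subrr addr0.
  by move=> ->; apply: inNr.
pose Fam := fun X : set A => lideal (fun z => X z \/ P0 z) /\ ~ (X u \/ P0 u).
have [Xm [FXm maxXm]] : exists X, Fam X /\ forall B, (X `<` B)%classic -> ~ Fam B.
  apply: Zorn_bigcup => F FF tot.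
  pose U := (\bigcup_(X in F) X)%classic.
  have lift X : F X -> forall z, X z \/ P0 z -> U z \/ P0 z.
    by move=> FX z [Xz|Pz]; [left; exists X | right].
  have [P00 [P0D [P0Z P0M]]] := P0l.
  split; last first.
    move=> [[X FX Xu]|Pu]; last exact: nP0u.
    by apply: (FF X FX).2; left.
  split; first by right.
  split.
    move=> x y [[X FX Xx]|Px] [[Y FY Yy]|Py]; last by right; apply: P0D.
    - have [sXY|sYX] := tot X Y FX FY.
        apply: (lift Y FY); apply: (FF Y FY).1.2.1; left=> //; exact: sXY.
      apply: (lift X FX); apply: (FF X FX).1.2.1; left=> //; exact: sYX.
    - by apply: (lift X FX); apply: (FF X FX).1.2.1; [left|right].
    - by apply: (lift Y FY); apply: (FF Y FY).1.2.1; [right|left].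
  split.
    move=> c x [[X FX Xx]|Px]; last by right; apply: P0Z.
    by apply: (lift X FX); apply: (FF X FX).1.2.2.1; left.
  move=> a x [[X FX Xx]|Px]; last by right; apply: P0M.
  by apply: (lift X FX); apply: (FF X FX).1.2.2.2; left.
pose J z := Xm z \/ P0 z.
have [lJ nJu] : lideal J /\ ~ J u by [].
have maxJ B : lideal B -> (forall z, J z -> B z) -> ~ B u -> forall z, B z -> J z.
  move=> lB JB nBu z Bz; apply: contrapT => nJz.
  apply: (maxXm B).
    split; first by move=> t Xt; apply: JB; left.
    by move=> BX; apply: nJz; left; apply: BX.
  split; last by case=> // /JB.
  apply: lideal_ext lB => t; split; first by left.
  by case=> // Pt; apply: JB; right.
have [J0 [JD [JZ JM]]] := lJ.
pose M := Q J0 JD JZ.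
pose pi := qpi J0 JD JZ.
pose act (a : A) (q : M) : M := pi (mul a (repr q)).
have qi (Pr : M -> Prop) : (forall v, Pr (pi v)) -> forall q, Pr q.
  exact: qind.
have actE a v : act a (pi v) = pi (mul a v).
  apply/qpiP; rewrite -mulBr; apply: JM; apply/qpiP.
  by rewrite /pi qrepr.
have piD x y : pi (x + y) = pi x + pi y by apply: qpiD.
have piZ c x : pi (c *: x) = c *: pi x by apply: qpiZ.
have pi0 : pi 0 = 0 by [].
have pi_eq0 x : pi x = 0 <-> J x by apply: qpi_eq0.
have piu : pi u <> 0 by move/pi_eq0.
have piuf v : pi v = act v (pi u).
  rewrite actE; apply/qpiP; right; exists 0, v; split; first exact: inN0.
  by rewrite add0r.
have acte q : act e q = 0.
  elim/qi: q => v; rewrite actE; apply/pi_eq0; right.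
  exists (mul e v), 0; split; first exact: inN_e.
  by rewrite amul0r subrr addr0.
have act0 a : act a 0 = 0 by rewrite -pi0 actE amulr0.
have modM : is_module mul act.
  split; first by move=> a b; elim/qi=> v; rewrite !actE mulA.
  split; first by move=> a; elim/qi=> v; elim/qi=> w; rewrite -piD !actE mulDr piD.
  split; first by move=> a b; elim/qi=> v; rewrite !actE mulDl piD.
  split; first by move=> c a; elim/qi=> v; rewrite -piZ !actE mulZr piZ.
  by move=> c a; elim/qi=> v; rewrite !actE mulZl piZ.
have irrM : irreducible act.
  split; first by exists (pi u).
  move=> S [S0 [SD [SZ SA]]].
  have [allz|nallz] := pselect (forall m, S m -> m = 0); first by left.
  have [m [Sm mnz]] : exists m, S m /\ m <> 0.
    apply: contrapT => h; apply: nallz => m Sm; apply: contrapT => mnz.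
    by apply: h; exists m.
  right; move: m Sm mnz; elim/qi=> v Sv vnz.
  have nJv : ~ J v by move/pi_eq0.
  pose B z := exists j a c, J j /\ z = j + mul a v + c *: v.
  have lB : lideal B.
    split; first by exists 0, 0, 0; rewrite amul0r scale0r !addr0.
    split.
      move=> _ _ [j1 [a1 [c1 [h1 ->]]]] [j2 [a2 [c2 [h2 ->]]]].
      exists (j1 + j2), (a1 + a2), (c1 + c2); split; first exact (JD _ _ h1 h2).
      by rewrite mulDl scalerDl [LHS]addrACA [in LHS](addrACA j1).
    split.
      move=> c _ [j [a [c1 [h ->]]]]; exists (c *: j), (c *: a), (c * c1).
      by split; [exact (JZ _ _ h)|rewrite !scalerDr mulZl scalerA].
    move=> b _ [j [a [c1 [h ->]]]]; exists (mul b j), (mul b a + c1 *: b), 0.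
    split; first exact (JM _ _ h).
    by rewrite scale0r addr0 !mulDr mulZr mulDl mulZl mulA addrA.
  have JB z : J z -> B z.
    by move=> Jz; exists z, 0, 0; rewrite amul0r scale0r !addr0.
  have Bu : B u.
    apply: contrapT => nBu; apply: nJv; apply: (maxJ B lB JB nBu).
    by exists 0, 0, 1; rewrite amul0r scale1r !add0r.
  have [j [a [c [Jj Eu]]]] := Bu.
  have Su : S (pi u).
    rewrite Eu !piD piZ (proj2 (pi_eq0 j) Jj) add0r -actE.
    by apply: SD; [apply: SA|apply: SZ].
  by elim/qi=> w; rewrite piuf; apply: SA.
have qcM : quasicoherent act.
  move=> m; have [->|mnz] := pselect (m = 0); first by exists 0.
  pose S m' := exists a, m' = act a m.
  have sS : submodule act S.
    split; first by exists 0; elim/qi: m {S mnz} => v; rewrite actE amul0r.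
    split; first by move=> _ _ [a ->] [b ->]; exists (a + b); rewrite modM.2.2.1.
    split; first by move=> c _ [a ->]; exists (c *: a); rewrite modM.2.2.2.2.
    by move=> b _ [a ->]; exists (mul b a); rewrite modM.1.
  have [allz|allS] := irrM.2 S sS; last first.
    by have [a ha] := allS m; exists a; rewrite -ha.
  exfalso.
  pose S' m' := forall a, act a m' = 0.
  have sS' : submodule act S'.
    split; first by move=> a; apply: act0.
    split; first by move=> x y hx hy a; rewrite modM.2.1 hx hy addr0.
    split; first by move=> c x hx a; rewrite modM.2.2.2.1 hx scaler0.
    by move=> b x hx a; rewrite -modM.1 hx.
  have [allz'|allS'] := irrM.2 S' sS'.
    by apply: mnz; apply: allz'; move=> a; apply: allz; exists a.
  by apply: piu; have := allS' (pi u) u; rewrite actE hu.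
have [g [_ [_ [gA gS]]]] := gen M act modM qcM irrM.
have Ae_e : in_Ae mul e e by exists e.
have ge : g e = 0 by rewrite -{1}he gA // acte.
have [x [[a ->] gx]] := gS (pi u).
by apply: piu; rewrite -gx gA // ge act0.
Qed.
End Alg.
Lemma InP (T : eqType) (x : T) (s : seq T) : List.In x s <-> x \in s.
Proof.
elim: s => [//|y s IH] /=; rewrite in_cons; split.
  by case=> [->|/IH ->]; rewrite ?eqxx ?orbT.
by case/orP=> [/eqP ->|/IH]; [left|right].
Qed.

Lemma NoDupP (T : eqType) (s : seq T) : List.NoDup s <-> uniq s.
Proof.
elim: s => [|y s IH] /=; first by split=> // _; constructor.
split.
  move=> h; inversion h; subst; apply/andP; split; last exact/IH.
  by apply/negP => /InP.
case/andP=> ny us; constructor; last exact/IH.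
by move/InP; apply/negP.
Qed.

Lemma sum_sub (T : eqType) (V : zmodType) (s u : seq T) (F : T -> V) :
  uniq s -> uniq u -> {subset s <= u} -> (forall i, i \notin s -> F i = 0) ->
  \sum_(i <- u) F i = \sum_(i <- s) F i.
Proof.
move=> us uu sub F0.
rewrite (bigID (fun i => i \in s)) /= [X in _ + X]big1 ?addr0; last first.
  by move=> i /F0.
rewrite -big_filter; apply: perm_big; apply: uniq_perm.
- exact: filter_uniq.
- exact: us.
move=> i; rewrite mem_filter; apply/andP/idP; first by case.
by move=> si; split=> //; apply: sub.
Qed.

Lemma sum_reindex (T : eqType) (V : zmodType) (s t : seq T) (F : T -> V) :
  uniq s -> uniq t -> (forall i, i \notin s -> F i = 0) ->
  (forall i, i \notin t -> F i = 0) ->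
  \sum_(i <- s) F i = \sum_(i <- t) F i.
Proof.
move=> us ut Fs Ft.
rewrite -(@sum_sub _ _ s (undup (s ++ t))) ?undup_uniq //; last first.
  by move=> i si; rewrite mem_undup mem_cat si.
rewrite (@sum_sub _ _ t (undup (s ++ t))) ?undup_uniq //.
by move=> i ti; rewrite mem_undup mem_cat ti orbT.
Qed.
Section Coord.
Variables (K : fieldType) (A : lmodType K) (mul : A -> A -> A) (e : A).
Hypotheses (H : is_algebra mul) (he : idempotent mul e).

Local Notation eAe := (in_eAe mul e).
Local Notation Ae := (in_Ae mul e).

Lemma eAe_e : eAe e.
Proof. by exists e; rewrite !he. Qed.
Lemma eAe_Ae b : eAe b -> Ae b.
Proof. by move=> [c ->]; exists (mul e c); rewrite (mulA H). Qed.
Lemma eAe_l b : eAe b -> mul e b = b.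
Proof. by move=> [c ->]; rewrite (mulA H) he. Qed.
Lemma Ae_r xi : Ae xi -> mul xi e = xi.
Proof. by move=> [c ->]; rewrite -(mulA H) he. Qed.
Lemma eAe_mul b b' : eAe b -> eAe b' -> eAe (mul b b').
Proof.
move=> [c ->] [c' ->]; exists (mul c (mul e c')).
by rewrite -!(mulA H) (mulA H e e) he.
Qed.
Lemma eAe_0 : eAe 0.
Proof. by exists 0; rewrite (amul0r H) (amulr0 H). Qed.
Lemma eAe_D b b' : eAe b -> eAe b' -> eAe (b + b').
Proof. by move=> [c ->] [c' ->]; exists (c + c'); rewrite (mulDl H) (mulDr H). Qed.
Lemma eAe_Z (k : K) b : eAe b -> eAe (k *: b).
Proof. by move=> [c ->]; exists (k *: c); rewrite (mulZl H) (mulZr H). Qed.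
Lemma eAe_sum (J : Type) (s : seq J) F : (forall j, eAe (F j)) -> eAe (\sum_(j <- s) F j).
Proof.
move=> h; elim: s => [|j s IH]; first by rewrite big_nil; exact: eAe_0.
by rewrite big_cons; apply: eAe_D.
Qed.
Lemma Ae_0 : Ae 0.
Proof. by exists 0; rewrite (amul0r H). Qed.
Lemma Ae_D x y : Ae x -> Ae y -> Ae (x + y).
Proof. by move=> [c ->] [c' ->]; exists (c + c'); rewrite (mulDl H). Qed.
Lemma Ae_Z (k : K) x : Ae x -> Ae (k *: x).
Proof. by move=> [c ->]; exists (k *: c); rewrite (mulZl H). Qed.
Lemma Ae_l a x : Ae x -> Ae (mul a x).
Proof. by move=> [c ->]; exists (mul a c); rewrite (mulA H). Qed.
Lemma Ae_mr x b : Ae x -> eAe b -> Ae (mul x b).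
Proof. by move=> [c ->] [c' ->]; exists (mul c (mul e (mul e c'))); rewrite -!(mulA H). Qed.
Lemma Ae_sum (J : Type) (s : seq J) F : (forall j, Ae (F j)) -> Ae (\sum_(j <- s) F j).
Proof.
move=> h; elim: s => [|j s IH]; first by rewrite big_nil; exact: Ae_0.
by rewrite big_cons; apply: Ae_D.
Qed.

Variables (I : eqType) (al ch : I -> A -> A).
Hypothesis lcs : left_coord_sys mul e al ch.

Lemma al_Ae i b : eAe b -> Ae (al i b).
Proof. by case: lcs => h _; apply: h. Qed.
Lemma al_D i b b' : eAe b -> eAe b' -> al i (b + b') = al i b + al i b'.
Proof. by case: lcs => _ [h _]; apply: h. Qed.
Lemma al_Z i (c : K) b : eAe b -> al i (c *: b) = c *: al i b.
Proof. by case: lcs => _ [_ [h _]]; apply: h. Qed.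
Lemma al_M i b b' : eAe b -> eAe b' -> al i (mul b b') = mul (al i b) b'.
Proof. by case: lcs => _ [_ [_ [h _]]]; apply: h. Qed.
Lemma ch_eAe i x : Ae x -> eAe (ch i x).
Proof. by case: lcs => _ [_ [_ [_ [h _]]]]; apply: h. Qed.
Lemma ch_D i x y : Ae x -> Ae y -> ch i (x + y) = ch i x + ch i y.
Proof. by case: lcs => _ [_ [_ [_ [_ [h _]]]]]; apply: h. Qed.
Lemma ch_Z i (c : K) x : Ae x -> ch i (c *: x) = c *: ch i x.
Proof. by case: lcs => _ [_ [_ [_ [_ [_ [h _]]]]]]; apply: h. Qed.
Lemma ch_M i x b : Ae x -> eAe b -> ch i (mul x b) = mul (ch i x) b.
Proof. by case: lcs => _ [_ [_ [_ [_ [_ [_ [h _]]]]]]]; apply: h. Qed.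
Lemma coordA xi : Ae xi -> exists s : seq I, uniq s /\
      (forall i, i \notin s -> ch i xi = 0) /\ xi = \sum_(i <- s) al i (ch i xi).
Proof.
case: lcs => _ [_ [_ [_ [_ [_ [_ [_ [h _]]]]]]]] /h [s [nd [h0 hs]]].
exists s; split; first exact/NoDupP.
by split=> // i ni; apply: h0 => /InP; apply/negP.
Qed.
Definition Bx x (s : seq I) := forall i, i \notin s ->
      (forall b, eAe b -> mul x (al i b) = 0) /\ (forall xi, Ae xi -> ch i (mul x xi) = 0).
Lemma coordB x : exists s, Bx x s.
Proof.
case: lcs => _ [_ [_ [_ [_ [_ [_ [_ [_ h]]]]]]]]; have [s hs] := h x.
by exists s => i ni; apply: hs => /InP; apply/negP.
Qed.
Lemma Bx_sub x s t : Bx x s -> {subset s <= t} -> Bx x t.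
Proof. by move=> h st i nt; apply: h; apply: contra nt; apply: st. Qed.

Lemma al0 i : al i 0 = 0.
Proof. by rewrite -(scale0r (0:A)) al_Z ?scale0r //; exact: eAe_0. Qed.
Lemma ch0 i : ch i 0 = 0.
Proof. by rewrite -(scale0r (0:A)) ch_Z ?scale0r //; exact: Ae_0. Qed.
Lemma alE i b : eAe b -> al i b = mul (al i e) b.
Proof. by move=> hb; rewrite -al_M ?eAe_l //; exact: eAe_e. Qed.
Lemma ch_sum i (J : Type) (s : seq J) F : (forall j, Ae (F j)) ->
  ch i (\sum_(j <- s) F j) = \sum_(j <- s) ch i (F j).
Proof.
move=> h; elim: s => [|j s IH]; first by rewrite !big_nil ch0.
by rewrite !big_cons ch_D ?IH //; apply: Ae_sum.
Qed.
Lemma al_e_Ae i : Ae (al i e).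
Proof. apply: al_Ae; exact: eAe_e. Qed.

Lemma e_Ae_eAe x : Ae x -> eAe (mul e x).
Proof. by move=> [a ->]; exists a. Qed.

Variable phi : A -> K.
Hypothesis hphi : SLF_eAe mul e phi.

Lemma phiD b b' : eAe b -> eAe b' -> phi (b + b') = phi b + phi b'.
Proof. by case: hphi => h _; apply: h. Qed.
Lemma phiZ (c : K) b : eAe b -> phi (c *: b) = c * phi b.
Proof. by case: hphi => _ [h _]; apply: h. Qed.
Lemma phiC b b' : eAe b -> eAe b' -> phi (mul b b') = phi (mul b' b).
Proof. by case: hphi => _ [_ h]; apply: h. Qed.
Lemma phi0 : phi 0 = 0.
Proof. by rewrite -(scale0r (0:A)) phiZ ?mul0r //; exact: eAe_0. Qed.
Lemma phi_sum (J : Type) (s : seq J) F : (forall j, eAe (F j)) ->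
  phi (\sum_(j <- s) F j) = \sum_(j <- s) phi (F j).
Proof.
move=> h; elim: s => [|j s IH]; first by rewrite !big_nil phi0.
by rewrite !big_cons phiD ?IH //; apply: eAe_sum.
Qed.

Definition Sx x : seq I := undup (projT1 (cid (coordB x))).
Lemma Sx_uniq x : uniq (Sx x).
Proof. exact: undup_uniq. Qed.
Lemma Sx_B x : Bx x (Sx x).
Proof.
rewrite /Sx; case: (cid (coordB x)) => s hs /=.
by apply: Bx_sub hs _ => i; rewrite mem_undup.
Qed.

Definition Tr x := \sum_(i <- Sx x) phi (ch i (mul x (al i e))).

Lemma Tr_any x u : uniq u -> (forall i, i \notin u -> ch i (mul x (al i e)) = 0) ->
  Tr x = \sum_(i <- u) phi (ch i (mul x (al i e))).
Proof.
move=> uu hu; apply: sum_reindex => //; first exact: Sx_uniq.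
  by move=> i ni; rewrite ((Sx_B ni).2 _ (al_e_Ae i)) phi0.
by move=> i ni; rewrite hu // phi0.
Qed.

Lemma Tr_B x u : uniq u -> Bx x u -> Tr x = \sum_(i <- u) phi (ch i (mul x (al i e))).
Proof. by move=> uu hu; apply: Tr_any => // i ni; apply: (hu i ni).2; apply: al_e_Ae. Qed.

Lemma Tr_D x y : Tr (x + y) = Tr x + Tr y.
Proof.
pose u := undup (Sx x ++ Sx y).
have uu : uniq u by apply: undup_uniq.
have Bxu : Bx x u by apply: Bx_sub (@Sx_B x) _ => i hi; rewrite mem_undup mem_cat hi.
have Byu : Bx y u by apply: Bx_sub (@Sx_B y) _ => i hi; rewrite mem_undup mem_cat hi orbT.
rewrite (Tr_B uu Bxu) (Tr_B uu Byu) (@Tr_any _ u uu); last first.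
  move=> i ni; rewrite (mulDl H) ch_D ?(Bxu i ni).2 ?(Byu i ni).2 ?addr0 //;
    by (try apply: Ae_l); apply: al_e_Ae.
rewrite -big_split /=; apply: eq_bigr => i _.
have hx := Ae_l x (al_e_Ae i); have hy := Ae_l y (al_e_Ae i).
by rewrite (mulDl H) ch_D // phiD //; apply: ch_eAe.
Qed.

Lemma Tr_Z (c : K) x : Tr (c *: x) = c * Tr x.
Proof.
rewrite (Tr_B (@Sx_uniq x) (@Sx_B x)) (@Tr_any _ (Sx x) (@Sx_uniq x)); last first.
  move=> i ni; rewrite (mulZl H) ch_Z ?(Sx_B ni).2 ?scaler0 //; try apply: al_e_Ae.
  by apply: Ae_l; apply: al_e_Ae.
rewrite mulr_sumr; apply: eq_bigr => i _.
have hx := Ae_l x (al_e_Ae i).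
by rewrite (mulZl H) ch_Z // phiZ //; apply: ch_eAe.
Qed.

Lemma Tr_double x y u : uniq u -> Bx x u ->
  Tr (mul x y) = \sum_(i <- u) \sum_(j <- u)
     phi (mul (ch i (mul x (al j e))) (ch j (mul y (al i e)))).
Proof.
move=> uu Bxu.
rewrite (@Tr_any _ u uu); last first.
  by move=> i ni; rewrite -(mulA H); apply: (Bxu i ni).2; apply: Ae_l; apply: al_e_Ae.
apply: eq_bigr => i _.
set w := mul y (al i e).
have hw : Ae w by apply: Ae_l; apply: al_e_Ae.
have [s [us [s0 ws]]] := coordA hw.
have E : mul x w = \sum_(j <- u) mul x (al j (ch j w)).
  rewrite {1}ws (mul_sumr H); apply: sum_reindex => //.
    by move=> j nj; rewrite s0 // al0 (amulr0 H).
  by move=> j nj; apply: (Bxu j nj).1; apply: ch_eAe.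
rewrite -(mulA H) -/w E ch_sum; last first.
  by move=> j; apply: Ae_l; apply: al_Ae; apply: ch_eAe.
rewrite phi_sum; last by move=> j; apply: ch_eAe; apply: Ae_l; apply: al_Ae; apply: ch_eAe.
apply: eq_bigr => j _.
rewrite (alE j (ch_eAe j hw)) (mulA H) ch_M //; last exact: ch_eAe.
by apply: Ae_l; apply: al_e_Ae.
Qed.

Lemma Tr_C x y : Tr (mul x y) = Tr (mul y x).
Proof.
pose u := undup (Sx x ++ Sx y).
have uu : uniq u by apply: undup_uniq.
have Bxu : Bx x u by apply: Bx_sub (@Sx_B x) _ => i hi; rewrite mem_undup mem_cat hi.
have Byu : Bx y u by apply: Bx_sub (@Sx_B y) _ => i hi; rewrite mem_undup mem_cat hi orbT.
rewrite (Tr_double y uu Bxu) (Tr_double x uu Byu) exchange_big.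
apply: eq_bigr => i _; apply: eq_bigr => j _.
by rewrite phiC //; apply: ch_eAe; apply: Ae_l; apply: al_e_Ae.
Qed.

Lemma Tr_eAe b : eAe b -> Tr b = phi b.
Proof.
move=> hb; have hbA := eAe_Ae hb.
have [s [us [s0 bs]]] := coordA hbA.
pose u := undup (Sx b ++ s).
have uu : uniq u by apply: undup_uniq.
have Bbu : Bx b u by apply: Bx_sub (@Sx_B b) _ => i hi; rewrite mem_undup mem_cat hi.
rewrite (Tr_B uu Bbu).
have E i : phi (ch i (mul b (al i e))) = phi (mul e (al i (ch i b))).
  have h1 : eAe (mul e (al i e)) by apply: e_Ae_eAe; apply: al_e_Ae.
  rewrite -{1}(Ae_r hbA) -(mulA H) ch_M // phiC //; last exact: ch_eAe.
  by rewrite -(mulA H) -alE //; exact: ch_eAe.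
rewrite (eq_bigr _ (fun i _ => E i)) -phi_sum; last first.
  by move=> i; apply: e_Ae_eAe; apply: al_Ae; apply: ch_eAe.
rewrite -(mul_sumr H); congr phi.
rewrite -[RHS](eAe_l hb); congr mul; rewrite [RHS]bs.
apply: sum_reindex => //.
  move=> i ni; rewrite s0 ?al0 //; apply: contra ni => his.
  by rewrite mem_undup mem_cat his orbT.
by move=> i ni; rewrite s0 // al0.
Qed.

Lemma Tr_pseudo : is_left_pseudotrace mul e al ch phi Tr.
Proof.
move=> x; exists (Sx x); split; first exact/NoDupP/Sx_uniq.
split=> // i /InP ni.
have ni' : i \notin Sx x by apply/negP.
by rewrite ((Sx_B ni').2 _ (al_e_Ae i)) phi0.
Qed.

Lemma Tr_SLF : SLF mul Tr.
Proof. by split; [exact: Tr_D | split; [exact: Tr_Z | exact: Tr_C]]. Qed.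

Lemma Tr0 : Tr 0 = 0.
Proof. by rewrite -(scale0r (0:A)) Tr_Z mul0r. Qed.

Lemma Tr_unique : SLF mul phi -> (forall x, inN mul e x) -> forall x, Tr x = phi x.
Proof.
move=> [pD [pZ pC]] hN x.
have p0 : phi 0 = 0 by rewrite -(scale0r (0:A)) pZ mul0r.
have [s ->] := hN x.
elim: s => [|[a b] s IH]; first by rewrite !big_nil Tr0 p0.
rewrite !big_cons Tr_D pD IH /=; congr (_ + _).
have E : mul a (mul e b) = mul (mul a e) (mul e b) by rewrite -(mulA H) (mulA H e) he.
have hb : eAe (mul e (mul (mul b a) e)) by exists (mul b a).
rewrite E Tr_C pC -(mulA H) (mulA H b) (mulA H e) Tr_eAe //.
by exists (mul b a); rewrite -(mulA H).
Qed.

End Coord.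

Section Construct.
Variables (K : fieldType) (A : lmodType K) (mul : A -> A -> A) (e : A).
Hypotheses (H : is_algebra mul) (he : idempotent mul e).
Variables (I : eqType) (f : I -> A).
Hypotheses (fid : forall i, idempotent mul (f i))
  (forth : forall i j, i <> j -> mul (f i) (f j) = 0)
  (fdec : forall x, exists (s : seq (I * I)) (a : I * I -> A),
        x = \sum_(p <- s) mul (f p.1) (mul (a p) (f p.2))).
Variable sp : I -> seq (A * A).
Hypothesis hsp : forall p, f p = \sum_(q <- sp p) mul q.1 (mul e q.2).

Local Notation eAe := (in_eAe mul e).
Local Notation Ae := (in_Ae mul e).

Definition X p k := (nth (0, 0) (sp p) k).1.
Definition Y p k := (nth (0, 0) (sp p) k).2.
Definition cal (i : I * nat) b := mul (f i.1) (mul (X i.1 i.2) (mul e b)).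
Definition cch (i : I * nat) v := mul e (mul (Y i.1 i.2) (mul (f i.1) v)).

Lemma sumXY p : \sum_(0 <= k < size (sp p)) mul (X p k) (mul e (Y p k)) = f p.
Proof. by rewrite hsp (big_nth (0, 0)). Qed.

Lemma XY0 p k : (size (sp p) <= k)%N -> X p k = 0 /\ Y p k = 0.
Proof. by move=> h; rewrite /X /Y nth_default. Qed.

Lemma left_supp x : exists ps : seq I, uniq ps /\
  (forall r, r \notin ps -> mul (f r) x = 0) /\ x = \sum_(r <- ps) mul (f r) x.
Proof.
have [s [a ->]] := fdec x.
exists (undup [seq p.1 | p <- s]); split; first exact: undup_uniq.
split.
  move=> r nr; rewrite (mul_sumr H) big1_seq // => pq /andP [_ hpq].
  rewrite (mulA H) forth ?(amul0r H) // => erp; move: nr; rewrite erp mem_undup.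
  by rewrite (map_f fst hpq).
under [RHS]eq_bigr => r _ do rewrite (mul_sumr H).
rewrite exchange_big /=; apply: eq_big_seq => pq hpq.
rewrite (bigD1_seq pq.1) /= ?undup_uniq //; last first.
  by rewrite mem_undup (map_f fst hpq).
rewrite big1 ?addr0; first by rewrite (mulA H (f pq.1) (f pq.1)) fid.
by move=> r /eqP nr; rewrite (mulA H) forth ?(amul0r H).
Qed.

Lemma right_supp x : exists qs : seq I, forall r, r \notin qs -> mul x (f r) = 0.
Proof.
have [s [a ->]] := fdec x.
exists [seq p.2 | p <- s] => r nr.
rewrite (mul_suml H) big1_seq // => pq /andP [_ hpq].
rewrite -!(mulA H) forth ?(amulr0 H) // => erp; move: nr; rewrite -erp.
by rewrite (map_f snd hpq).
Qed.

Lemma cons_lcs : left_coord_sys mul e cal cch.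
Proof.
rewrite /cal /cch.
split.
  by move=> [r k] _ [c ->]; exists (mul (f r) (mul (X r k) (mul e (mul e c))));
     rewrite -!(mulA H).
split.
  by move=> [r k] b b' _ _ /=; rewrite !(mulDr H).
split.
  by move=> [r k] c b _ /=; rewrite !(mulZr H).
split.
  by move=> [r k] b b' _ _ /=; rewrite -!(mulA H).
split.
  by move=> [r k] _ [c ->]; exists (mul (Y r k) (mul (f r) c)); rewrite -!(mulA H).
split.
  by move=> [r k] x y _ _ /=; rewrite !(mulDr H).
split.
  by move=> [r k] c x _ /=; rewrite !(mulZr H).
split.
  by move=> [r k] x b _ _ /=; rewrite -!(mulA H).
split.
  move=> xi hxi.
  have [ps [ups [ps0 psE]]] := left_supp xi.
  exists [seq (r, k) | r <- ps, k <- index_iota 0 (size (sp r))].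
  split.
    apply/NoDupP; apply: allpairs_uniq_dep => //.
      by move=> r _; apply: iota_uniq.
    by move=> [r1 k1] [r2 k2] _ _ /= [-> ->].
  split.
    move=> [r k] nin /=.
    have [kl|kg] := ltnP k (size (sp r)).
      have nr : r \notin ps.
        apply/negP => hr; apply: nin; apply/InP/allpairsPdep; exists r, k; split=> //.
        by rewrite mem_index_iota.
      by rewrite ps0 // !(amulr0 H).
    by rewrite (XY0 kg).2 (amul0r H) (amulr0 H).
  rewrite big_allpairs_dep /= {1}psE; apply: eq_bigr => r _.
  have E k : mul (X r k) (mul e (mul e (mul (Y r k) (mul (f r) xi)))) =
      mul (mul (X r k) (mul e (Y r k))) (mul (f r) xi).
    by rewrite (mulA H e e) he -!(mulA H).
  rewrite -(mul_sumr H) (eq_bigr _ (fun k _ => E k)) -(mul_suml H) sumXY.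
  by rewrite (mulA H (f r) (f r)) fid (mulA H (f r) (f r)) fid.
move=> x.
have [ps [_ [ps0 _]]] := left_supp x.
have [qs qs0] := right_supp x.
exists [seq (r, k) | r <- ps ++ qs, k <- index_iota 0 (size (sp r))].
move=> [r k] nin /=.
have [kl|kg] := ltnP k (size (sp r)).
  have nr : r \notin ps ++ qs.
    apply/negP => hr; apply: nin; apply/InP/allpairsPdep; exists r, k; split=> //.
    by rewrite mem_index_iota.
  move: nr; rewrite mem_cat negb_or => /andP [nps nqs].
  split.
    by move=> b _; rewrite (mulA H) qs0 // (amul0r H).
  by move=> xi _; rewrite (mulA H (f r)) ps0 // (amul0r H) !(amulr0 H).
have [X0 Y0] := XY0 kg.
split; first by move=> b _; rewrite X0 (amul0r H) !(amulr0 H).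
by move=> xi _; rewrite Y0 (amul0r H) (amulr0 H).
Qed.

End Construct.

Lemma all_inN (K : fieldType) (A : lmodType K) (mul : A -> A -> A) (e : A) :
  is_algebra mul -> AUF mul -> generating mul e -> forall x, inN mul e x.
Proof.
move=> H [I [f [fid [_ [_ fdec]]]]] gen x.
have [s [a ->]] := fdec x.
elim: s => [|p s IH]; first by rewrite big_nil; exact: inN0.
rewrite big_cons; apply: inND => //; apply: (inNr H).
exact: (idem_inN H gen (fid p.1)).
Qed.

Lemma SLF_eAe_of (K : fieldType) (A : lmodType K) (mul : A -> A -> A) (e : A) psi :
  SLF mul psi -> SLF_eAe mul e psi.
Proof. by move=> [h1 [h2 h3]]; split; [|split] => *; [apply: h1|apply: h2|apply: h3]. Qed.

Theorem theorem6p6 (R : realType) (A : lmodType R[i]) (mul : A -> A -> A) (e : A) :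
  is_algebra mul -> strongly_AUF mul -> generating mul e ->
  (exists (I : Type) (al ch : I -> A -> A), left_coord_sys mul e al ch) /\
  (forall (I : Type) (al ch : I -> A -> A), left_coord_sys mul e al ch ->
     (* psi |-> psi|_{eAe} maps SLF(A) to SLF(eAe), and Tr^{psi|eAe} = psi *)
     (forall psi : A -> R[i], SLF mul psi ->
        SLF_eAe mul e psi /\ is_left_pseudotrace mul e al ch psi psi) /\
     (* Tr^phi lies in SLF(A) and restricts to phi on eAe *)
     (forall phi : A -> R[i], SLF_eAe mul e phi ->
        exists psi : A -> R[i], SLF mul psi /\
          (forall b, in_eAe mul e b -> psi b = phi b) /\
          is_left_pseudotrace mul e al ch phi psi)).
Proof.
move=> H [hAUF _] gen.
have he : idempotent mul e by case: gen.
have hN := all_inN H hAUF gen.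
split.
  have [I [f [fid [forth [_ fdec]]]]] := hAUF.
  have [sp hsp] := choice (fun p => idem_inN H gen (fid p)).
  exists ({classic I} * nat)%type.
  exists (@cal _ _ mul e {classic I} f sp), (@cch _ _ mul e {classic I} f sp).
  exact: (@cons_lcs _ _ mul e H he {classic I} f fid forth fdec sp hsp).
move=> I al ch lcs.
have lcs' : @left_coord_sys _ _ mul e {classic I} al ch := lcs.
split.
  move=> psi hpsi; have hpe := SLF_eAe_of e hpsi.
  split=> // x.
  have [s [nd [h0 hs]]] := Tr_pseudo H he lcs' hpe x.
  exists s; split=> //; split=> //.
  by rewrite -hs Tr_unique.
move=> phi hphi; exists (Tr lcs' phi).
split; first exact: Tr_SLF.
split; first by move=> b hb; apply: Tr_eAe.
exact: (Tr_pseudo H he lcs' hphi).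
Qed.
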